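(* Let $\lambda^1,\dots,\lambda^N$ be loss functions such that each $\lambda^n$ is proper and $\eta^n$-mixable for some $\eta^n>0$. Consider the game: set $L_0^{(n)}:=0$, $L_0^n:=0$; at each step $t=1,2,\dots$, each Expert $n$ announces $\gamma_t^n\in[0,1]$, then Learner announces $\gamma_t\in[0,1]$, then Reality announces $\omega_t\in\{0,1\}$, and $L_t^{(n)}:=L_{t-1}^{(n)}+\lambda^n(\gamma_t,\omega_t)$, $L_t^n:=L_{t-1}^n+\lambda^n(\gamma_t^n,\omega_t)$ for $n=1,\dots,N$. Then Learner has a strategy guaranteeing, for all $T$ and all $n=1,\dots,N$, $$L_T^{(n)}\le L_T^n+\frac{\ln N}{\eta^n}.$$
   Context: A loss function is a map $\lambda:[0,1]\times\{0,1\}\to[0,\infty]$ satisfying: (1) $\lambda(\gamma,0)$ and $\lambda(\gamma,1)$ are continuous in $\gamma\in[0,1]$ (standard topology on $[0,\infty]$); (2) some $\gamma$ has $\lambda(\gamma,0),\lambda(\gamma,1)$ both finite; (3) no $\gamma$ has both infinite. Superprediction set: $\Sigma_\lambda=\{(x,y)\in[0,\infty)^2:\exists\gamma\ \lambda(\gamma,0)\le x,\ \lambda(\gamma,1)\le y\}$. For $\eta>0$, $\lambda$ is $\eta$-mixable if $\{(e^{-\eta x},e^{-\eta y}):(x,y)\in\Sigma_\lambda\}$ is convex. $\lambda$ is proper if $\pi\lambda(\pi,1)+(1-\pi)\lambda(\pi,0)\le\pi\lambda(\pi',1)+(1-\pi)\lambda(\pi',0)$ for all $\pi,\pi'\in[0,1]$.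 *)

(* Defs.v *)
From HB Require Import structures.
From mathcomp Require Import all_boot all_order all_algebra.
From mathcomp Require Import all_classical all_reals all_analysis.
Set Implicit Arguments. Unset Strict Implicit. Unset Printing Implicit Defensive.
Import Order.TTheory GRing.Theory Num.Theory.
Import numFieldNormedType.Exports.
Local Open Scope classical_set_scope.
Local Open Scope ring_scope.

(* Outcomes omega in {0,1} are encoded as bool: false = 0, true = 1.
   A loss function is lam : R -> bool -> \bar R, only its values on [0,1] matter. *)
Section Loss.
Variable R : realType.

Definition loss_function (lam : R -> bool -> \bar R) : Prop :=
  (forall g b, 0 <= g <= 1 -> (0 <= lam g b)%E) /\
  (forall b, {within `[0, 1], continuous (fun g => lam g b)}) /\
  (exists g, 0 <= g <= 1 /\ lam g false \is a fin_num /\ lam g true \is a fin_num) /\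
  (forall g, 0 <= g <= 1 -> ~ (lam g false = +oo%E /\ lam g true = +oo%E)).

Definition superpred (lam : R -> bool -> \bar R) : set (R * R) :=
  [set xy | 0 <= xy.1 /\ 0 <= xy.2 /\
     exists g, 0 <= g <= 1 /\ (lam g false <= xy.1%:E)%E /\ (lam g true <= xy.2%:E)%E].

Definition convex_set2 (A : set (R * R)) : Prop :=
  forall p q t, A p -> A q -> 0 <= t <= 1 ->
    A (t * p.1 + (1 - t) * q.1, t * p.2 + (1 - t) * q.2).

Definition mixable (eta : R) (lam : R -> bool -> \bar R) : Prop :=
  convex_set2 ((fun xy : R * R => (expR (- eta * xy.1), expR (- eta * xy.2)))
                 @` superpred lam).

Definition proper_loss (lam : R -> bool -> \bar R) : Prop :=
  forall p p', 0 <= p <= 1 -> 0 <= p' <= 1 ->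
    (p%:E * lam p true + (1 - p)%:E * lam p false <=
     p%:E * lam p' true + (1 - p)%:E * lam p' false)%E.

(* A Learner strategy maps the history (experts' predictions at steps 0..t,
   outcomes at steps 0..t-1) to the Learner's prediction at step t. *)
Definition learner_pred (N : nat) (S : seq ('I_N -> R) -> seq bool -> R)
  (g : nat -> 'I_N -> R) (w : nat -> bool) (t : nat) : R :=
  S (mkseq g t.+1) (mkseq w t).

Definition learner_loss (N : nat) (lam : 'I_N -> R -> bool -> \bar R)
  (S : seq ('I_N -> R) -> seq bool -> R)
  (g : nat -> 'I_N -> R) (w : nat -> bool) (T : nat) (n : 'I_N) : \bar R :=
  (\sum_(t < T) lam n (learner_pred S g w t) (w t))%E.

Definition expert_loss (N : nat) (lam : 'I_N -> R -> bool -> \bar R)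
  (g : nat -> 'I_N -> R) (w : nat -> bool) (T : nat) (n : 'I_N) : \bar R :=
  (\sum_(t < T) lam n (g t n) (w t))%E.
End Loss.

(* Main.v *)
Require Import Defs.
From HB Require Import structures.
From mathcomp Require Import all_boot all_order all_algebra.
From mathcomp Require Import all_classical all_reals all_analysis.
Import Order.TTheory GRing.Theory Num.Theory.
Import numFieldNormedType.Exports.
Local Open Scope classical_set_scope.
Local Open Scope ring_scope.
From mathcomp Require Import ring lra.
Section OneLoss.
Variable R : realType.
Variable lam : R -> bool -> \bar R.
Hypothesis Hl : loss_function lam.
Hypothesis Hp : proper_loss lam.

Lemma lam_ge0 g b : 0 <= g <= 1 -> (0 <= lam g b)%E.
Proof. by case: Hl => H _; apply: H. Qed.

Lemma lam_cases g b : 0 <= g <= 1 -> lam g b \is a fin_num \/ lam g b = +oo%E.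
Proof.
move=> H; have := lam_ge0 g b H; case: (lam g b) => [r| |] //= _; by [left|right].
Qed.



Lemma fin_gen p b : 0 <= p <= 1 -> 0 < (if b then p else 1 - p) ->
  lam p b \is a fin_num.
Proof.
move=> p01 hpos.
case: Hl => _ [_ [[g [g01 [fg0 fg1]]] _]].
have := @Hp p g p01 g01.
have rhsfin : (p%:E * lam g true + (1 - p)%:E * lam g false)%E \is a fin_num.
  by rewrite fin_numD !fin_numM.
case: (lam_cases p b p01) => // Hinf.
have h0 : forall x, 0 <= x -> (0 <= x%:E * lam p (~~ b))%E.
  by move=> x hx; apply: mule_ge0 => //; apply: lam_ge0 p (~~ b) p01.
case: b hpos Hinf h0 => hpos Hinf h0 /=; rewrite Hinf.
- rewrite gt0_muley ?lte_fin // addye; last first.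
    by apply/negP => /eqP H; move: (h0 (1 - p)); rewrite H /=; case/andP: p01 => _; rewrite subr_ge0 => -> /(_ isT).
  by rewrite leye_eq => /eqP H; move: rhsfin; rewrite H.
- rewrite gt0_muley ?lte_fin // addey; last first.
    by apply/negP => /eqP H; move: (h0 p); rewrite H /=; case/andP: p01 => -> _ /(_ isT).
  by rewrite leye_eq => /eqP H; move: rhsfin; rewrite H.
Qed.
End OneLoss.
Section Cont.
Variable R : realType.

Definition ue (eta : R) (x : \bar R) : R := if x is EFin r then expR (- eta * r) else 0.

Lemma ue_ge0 eta x : 0 <= ue eta x.
Proof. by case: x => //= r; rewrite expR_ge0. Qed.

Lemma ue_cvg eta (F : set_system R) (FF : Filter F) (f : R -> \bar R) (l : \bar R) :
  0 < eta -> (l != -oo)%E -> f @ F --> l -> (fun g => ue eta (f g)) @ F --> ue eta l.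
Proof.
move=> eta0; case: l => [r| |] // _.
- move=> /fine_cvgP [Hfin Hc].
  have H : {near F, ((fun x => expR (- eta * x)) \o (fine \o f)) =1 (fun g => ue eta (f g))}.
    by apply: filterS Hfin => x /=; case: (f x).
  apply: cvg_trans (near_eq_cvg H) _.
  apply: continuous_cvg => //.
  apply: continuous_comp; last exact: continuous_expR.
  by apply: continuousM; [exact: cvg_cst| exact: cvg_id].
- move=> /cvgeyPge Hy /=.
  apply/cvgrPdist_lt => e e0.
  have := Hy ((1 - ln e) / eta).
  apply: filterS => x hx.
  rewrite sub0r normrN.
  case: (f x) hx => [r| |] //= hr; last by rewrite normr0.
  rewrite ger0_norm ?expR_ge0 //.
  rewrite lee_fin in hr.
  rewrite -[e in _ < e](lnK e0).
  rewrite ltr_expR.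
  rewrite ler_pdivrMr // in hr.
  lra.
Unshelve. all: by end_near.
Qed.
End Cont.
Arguments ue {R}.
Lemma andP_intro2 {a b : bool} : a -> b -> a && b. Proof. by move=> -> ->. Qed.

Lemma frac_lb (R : realType) (t a : R) : 0 < t <= 1/2 -> -1 <= a ->
  a - 2 * t * a ^+ 2 <= a / (1 + t * a).
Proof.
move=> /andP [t0 th] a1.
have hd : 0 < 1 + t * a by nra.
rewrite ler_pdivlMr //.
have h1 : 0 <= 1 + 2 * t * a by nra.
have h2 : 0 <= t * a ^+ 2 by apply: mulr_ge0; [lra | apply: sqr_ge0].
have := mulr_ge0 h2 h1.
nra.
Qed.

Lemma key_real2 (R : realType) (p a0 a1 : R) : 0 <= p <= 1 -> -1 <= a0 -> -1 <= a1 ->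
  (forall t, 0 < t <= 1/2 -> p * (a1 / (1 + t * a1)) + (1 - p) * (a0 / (1 + t * a0)) <= 0) ->
  p * a1 + (1 - p) * a0 <= 0.
Proof.
move=> /andP [p0 p1] h0 h1 H.
rewrite leNgt; apply/negP => D0.
set D := p * a1 + (1 - p) * a0 in D0.
set Q := p * a1 ^+ 2 + (1 - p) * a0 ^+ 2.
have Q0 : 0 <= Q by rewrite /Q; nra.
set t := Num.min (1/2) (D / (4 * Q + 1)).
have t0 : 0 < t.
  rewrite /t lt_min; apply/andP; split; first by lra.
  by apply: divr_gt0 => //; lra.
have th : t <= 1/2 by rewrite /t ge_min lexx.
have tD : t <= D / (4 * Q + 1) by rewrite /t ge_min lexx orbT.
have := H t; rewrite t0 th => /(_ isT) Ht.
have tD' : t * (4 * Q + 1) <= D by rewrite -ler_pdivlMr //; lra.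
have f1 := frac_lb _ _ _ (andP_intro2 t0 th) h1.
have f0 := frac_lb _ _ _ (andP_intro2 t0 th) h0.
have g1 : p * (a1 - 2 * t * a1 ^+ 2) <= p * (a1 / (1 + t * a1)) by apply: ler_wpM2l.
have g0 : (1 - p) * (a0 - 2 * t * a0 ^+ 2) <= (1 - p) * (a0 / (1 + t * a0)) by apply: ler_wpM2l; lra.
have : D - 2 * t * Q <= 0 by rewrite /D /Q; lra.
nra.
Qed.
Section KLemma.
Variable R : realType.
Variable lam : R -> bool -> \bar R.
Variable eta : R.
Hypothesis Hl : loss_function lam.
Hypothesis Hp : proper_loss lam.
Hypothesis Heta : 0 < eta.
Hypothesis Hm : mixable eta lam.

Definition uu b g := ue eta (lam g b).

Lemma uu_fin b g : lam g b \is a fin_num -> uu b g = expR (- eta * fine (lam g b)).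
Proof. by rewrite /uu; case: (lam g b). Qed.

Lemma frac_id {U V t : R} : 0 < U -> 0 < t * V + (1 - t) * U ->
  1 - U / (t * V + (1 - t) * U) = t * ((V / U - 1) / (1 + t * (V / U - 1))).
Proof.
move=> U0 W0.
have -> : 1 + t * (V / U - 1) = (t * V + (1 - t) * U) / U.
  by field; rewrite gt_eqF.
field.
by rewrite !gt_eqF.
Qed.

Lemma K_fin p e : 0 < p < 1 -> 0 <= e <= 1 ->
  lam e false \is a fin_num -> lam e true \is a fin_num ->
  p * (uu true e / uu true p) + (1 - p) * (uu false e / uu false p) <= 1.
Proof.
move=> /andP [p0 p1] e01 fe0 fe1.
have p01 : 0 <= p <= 1 by rewrite (ltW p0) (ltW p1).
have fp1 : lam p true \is a fin_num by apply: (@fin_gen _ _ Hl Hp p true p01).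
have fp0 : lam p false \is a fin_num by apply: (@fin_gen _ _ Hl Hp p false p01); rewrite /= subr_gt0.
set l0 := fine (lam p false); set l1 := fine (lam p true).
set m0 := fine (lam e false); set m1 := fine (lam e true).
have El0 : lam p false = l0%:E by rewrite fineK.
have El1 : lam p true = l1%:E by rewrite fineK.
have Em0 : lam e false = m0%:E by rewrite fineK.
have Em1 : lam e true = m1%:E by rewrite fineK.
rewrite /uu El0 El1 Em0 Em1 /=.
set U0 := expR (- eta * l0); set U1 := expR (- eta * l1).
set V0 := expR (- eta * m0); set V1 := expR (- eta * m1).
have U00 : 0 < U0 by apply: expR_gt0.
have U10 : 0 < U1 by apply: expR_gt0.
have V00 : 0 < V0 by apply: expR_gt0.
have V10 : 0 < V1 by apply: expR_gt0.
have l00 : 0 <= l0 by have := lam_ge0 _ _ Hl _ false p01; rewrite El0 lee_fin.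
have l10 : 0 <= l1 by have := lam_ge0 _ _ Hl _ true p01; rewrite El1 lee_fin.
have m00 : 0 <= m0 by have := lam_ge0 _ _ Hl _ false e01; rewrite Em0 lee_fin.
have m10 : 0 <= m1 by have := lam_ge0 _ _ Hl _ true e01; rewrite Em1 lee_fin.
have key := @key_real2 _ p (V0 / U0 - 1) (V1 / U1 - 1) p01.
suff : p * (V1 / U1 - 1) + (1 - p) * (V0 / U0 - 1) <= 0 by lra.
apply: key.
- have : 0 <= V0 / U0 by apply: divr_ge0; apply: ltW.
  lra.
- have : 0 <= V1 / U1 by apply: divr_ge0; apply: ltW.
  lra.
move=> t /andP [t0 th].
have W00 : 0 < t * V0 + (1 - t) * U0 by apply: ltr_pwDl; [apply: mulr_gt0 | apply: mulr_ge0]; lra.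
have W10 : 0 < t * V1 + (1 - t) * U1 by apply: ltr_pwDl; [apply: mulr_gt0 | apply: mulr_ge0]; lra.
have HP : ((fun xy : R * R => (expR (- eta * xy.1), expR (- eta * xy.2))) @` superpred lam) (V0, V1).
  exists (m0, m1) => //; split => //=; split => //; exists e; split => //.
  by rewrite -Em0 -Em1.
have HQ : ((fun xy : R * R => (expR (- eta * xy.1), expR (- eta * xy.2))) @` superpred lam) (U0, U1).
  exists (l0, l1) => //; split => //=; split => //; exists p; split => //.
  by rewrite -El0 -El1.
have ht : 0 <= t <= 1 by apply/andP; split; lra.
have := Hm (V0, V1) (U0, U1) t HP HQ ht.
case=> [[x y]] [/= x0 [y0 [g [g01 [hg0 hg1]]]]] [Ex Ey].
have Hprop := @Hp p g p01 g01.
have Hxy : p * l1 + (1 - p) * l0 <= p * y + (1 - p) * x.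
  rewrite -lee_fin; apply: (le_trans _ (le_trans Hprop _)).
    by rewrite El0 El1.
  apply: (@le_trans _ _ (p%:E * y%:E + (1-p)%:E * x%:E)%E); last by [].
  apply: leeD; apply: lee_wpmul2l => //; rewrite lee_fin; lra.
have B1 : 1 - U1 / (t * V1 + (1 - t) * U1) <= eta * (l1 - y).
  rewrite -Ey /U1 -expRB.
  have := expR_ge1Dx (- eta * l1 - - eta * y).
  lra.
have B0 : 1 - U0 / (t * V0 + (1 - t) * U0) <= eta * (l0 - x).
  rewrite -Ex /U0 -expRB.
  have := expR_ge1Dx (- eta * l0 - - eta * x).
  lra.
rewrite (frac_id U10 W10) in B1; rewrite (frac_id U00 W00) in B0.
have : t * (p * ((V1 / U1 - 1) / (1 + t * (V1 / U1 - 1))) + (1 - p) * ((V0 / U0 - 1) / (1 + t * (V0 / U0 - 1)))) <= 0.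
  have h1 := ler_wpM2l (ltW p0) B1.
  have h0 : (1 - p) * (t * ((V0 / U0 - 1) / (1 + t * (V0 / U0 - 1)))) <= (1 - p) * (eta * (l0 - x)).
    by apply: ler_wpM2l => //; lra.
  have : p * (eta * (l1 - y)) + (1 - p) * (eta * (l0 - x)) <= 0.
    have hd : 0 <= (p * y + (1 - p) * x) - (p * l1 + (1 - p) * l0) by rewrite subr_ge0.
    have := mulr_ge0 (ltW Heta) hd.
    lra.
  lra.
by rewrite pmulr_rle0.
Qed.
End KLemma.
Lemma near_within01 (R : realType) (a : R) (P : R -> Prop) :
  (\forall x \near within `[0, 1] (nbhs a), P x) ->
  exists2 d, 0 < d & forall x, `|a - x| < d -> 0 <= x <= 1 -> P x.
Proof.
rewrite /within => /nbhs_ballP [d d0 Hd]; exists d; first exact: d0.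
move=> x hx x01.
by apply: Hd; rewrite /ball /= ?in_itv.
Qed.

Lemma uu_cvg (R : realType) (lam : R -> bool -> \bar R) (eta : R) (b : bool) (a : R) :
  loss_function lam -> 0 < eta -> 0 <= a <= 1 ->
  (fun g => ue eta (lam g b)) @ within `[0, 1] (nbhs a) --> ue eta (lam a b).
Proof.
move=> Hl eta0 a01.
apply: ue_cvg => //.
  by have := lam_ge0 _ _ Hl _ b a01; case: (lam a b).
have := (proj1 (subspace_continuousP _ _)) (proj1 (proj2 Hl) b) a.
by apply; rewrite /= in_itv /=.
Qed.
Lemma ue_le (R : realType) (eta : R) (x y : \bar R) : 0 < eta -> (0 <= x)%E -> (x <= y)%E ->
  ue eta y <= ue eta x.
Proof.
move=> eta0 x0 xy.
case: x x0 xy => [r| |] x0 xy.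
- case: y xy => [s| |] xy /=; last by [].
  + rewrite lee_fin in xy; rewrite ler_expR !mulNr lerN2; apply: ler_wpM2l => //; exact: ltW.
  + by apply: expR_ge0.
- by move: xy; rewrite leye_eq => /eqP ->.
- by [].
Qed.

Lemma pick_in01 (R : realType) (a d : R) : 0 <= a <= 1 -> 0 < d ->
  exists g, 0 < g < 1 /\ `|a - g| < d.
Proof.
move=> /andP [a0 a1] d0.
set m := Num.min d (1/2).
have m0 : 0 < m by rewrite /m lt_min d0 /=; lra.
have md : m <= d by rewrite /m ge_min lexx.
have mh : m <= 1/2 by rewrite /m ge_min lexx orbT.
case: (lerP a (1/2)) => ha.
- exists (a + m / 2); split; first by apply/andP; split; lra.
  rewrite (_ : a - (a + m / 2) = - (m / 2)); last by ring.
  rewrite normrN ger0_norm; lra.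
- exists (a - m / 2); split; first by apply/andP; split; lra.
  rewrite (_ : a - (a - m / 2) = (m / 2)); last by ring.
  rewrite ger0_norm; lra.
Qed.

Lemma approx_pt (R : realType) (f : R -> R) (a q c : R) : 0 <= a <= 1 ->
  f @ within `[0, 1] (nbhs a) --> f a -> 0 < q -> c < q * f a ->
  exists g, 0 < g < 1 /\ c < q * f g.
Proof.
move=> a01 hf q0 hc.
have e0 : 0 < f a - c / q.
  by rewrite subr_gt0 ltr_pdivrMr // mulrC.
have H : \forall t \near within `[0, 1] (nbhs a), `|f a - f t| < f a - c / q by apply: (proj1 (cvgrPdist_lt _ _) hf).
have [d d0 Hd] := @near_within01 R a _ H.
have [g [g01 hg]] := pick_in01 _ _ _ a01 d0.
exists g; split => //.
have := Hd g hg; rewrite (ltW (proj1 (andP g01))) (ltW (proj2 (andP g01))) => /(_ isT).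
move=> h.
have h2 : f a - f g < f a - c / q by apply: le_lt_trans h; apply: ler_norm.
have : c / q < f g by lra.
by rewrite ltr_pdivrMr // mulrC.
Qed.

Section KAll.
Variable R : realType.
Variable lam : R -> bool -> \bar R.
Variable eta : R.
Hypothesis Hl : loss_function lam.
Hypothesis Hp : proper_loss lam.
Hypothesis Heta : 0 < eta.
Hypothesis Hm : mixable eta lam.

Local Notation u b g := (ue eta (lam g b)).

Lemma u_gt0 {b g} : 0 <= g <= 1 -> lam g b \is a fin_num -> 0 < u b g.
Proof. by move=> _; case: (lam g b) => //= r _; apply: expR_gt0. Qed.

Lemma u_eq0 {b g} : 0 <= g <= 1 -> ~ (lam g b \is a fin_num) -> u b g = 0.
Proof. by move=> _; case: (lam g b). Qed.

Lemma K_all p e : 0 <= p <= 1 -> 0 <= e <= 1 ->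
  p * (u true e / u true p) + (1 - p) * (u false e / u false p) <= 1.
Proof.
move=> p01 e01.
have [p0|p0] := eqVneq p 0.
  subst p; rewrite mul0r add0r subr0 mul1r.
  have f0 : lam 0 false \is a fin_num by apply: (@fin_gen _ _ Hl Hp 0 false p01); rewrite /= subr0.
  have u0 := u_gt0 p01 f0.
  rewrite ler_pdivrMr // mul1r.
  apply: ue_le => //; first exact: lam_ge0 _ _ Hl _ false p01.
  have := @Hp 0 e p01 e01.
  by rewrite !mul0e !add0e subr0 !mul1e.
have [p1|p1] := eqVneq p 1.
  subst p; rewrite subrr mul0r addr0 mul1r.
  have f1 : lam 1 true \is a fin_num by apply: (@fin_gen _ _ Hl Hp 1 true p01).
  have u1 := u_gt0 p01 f1.
  rewrite ler_pdivrMr // mul1r.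
  apply: ue_le => //; first exact: lam_ge0 _ _ Hl _ true p01.
  have := @Hp 1 e p01 e01.
  by rewrite subrr !mul0e !adde0 !mul1e.
have pp : 0 < p < 1.
  case/andP: (p01) => pa pb; apply/andP; split; rewrite lt_neqAle ?pa ?pb 1?eq_sym ?p0 ?p1 //.
  by rewrite eq_sym p1.
have fp1 : lam p true \is a fin_num by apply: (@fin_gen _ _ Hl Hp p true p01); rewrite /= (proj1 (andP pp)).
have fp0 : lam p false \is a fin_num by apply: (@fin_gen _ _ Hl Hp p false p01); rewrite /= subr_gt0 (proj2 (andP pp)).
have up1 := u_gt0 p01 fp1.
have up0 := u_gt0 p01 fp0.
have [fe1|fe1] := boolP (lam e true \is a fin_num); have [fe0|fe0] := boolP (lam e false \is a fin_num).
- exact: K_fin.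
-
  rewrite (u_eq0 e01 (negP fe0)) mul0r mulr0 addr0.
  rewrite leNgt; apply/negP => hc.
  have hc' : u true p < p * u true e.
    by move: hc; rewrite mulrA ltr_pdivlMr // mul1r.
  have [g [g01 hg]] := @approx_pt _ _ _ _ _ e01 (@uu_cvg _ _ _ true e Hl Heta e01) (proj1 (andP pp)) hc'.
  have g01' : 0 <= g <= 1 by case/andP: g01 => ga gb; rewrite (ltW ga) (ltW gb).
  have fg1 : lam g true \is a fin_num by apply: (@fin_gen _ _ Hl Hp g true g01'); rewrite /= (proj1 (andP g01)).
  have fg0 : lam g false \is a fin_num by apply: (@fin_gen _ _ Hl Hp g false g01'); rewrite /= subr_gt0 (proj2 (andP g01)).
  have := @K_fin _ _ _ Hl Hp Heta Hm _ _ pp g01' fg0 fg1.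
  have : 0 <= (1 - p) * (u false g / u false p).
    apply: mulr_ge0; first by case/andP: pp => _ ?; rewrite subr_ge0 ltW.
    by apply: divr_ge0; [apply: ue_ge0 | apply: ltW].
  have : 1 < p * (u true g / u true p) by rewrite mulrA ltr_pdivlMr // mul1r.
  rewrite /uu; lra.
-
  rewrite (u_eq0 e01 (negP fe1)) mul0r mulr0 add0r.
  rewrite leNgt; apply/negP => hc.
  have pq : 0 < 1 - p by rewrite subr_gt0 (proj2 (andP pp)).
  have hc' : u false p < (1 - p) * u false e.
    by move: hc; rewrite mulrA ltr_pdivlMr // mul1r.
  have [g [g01 hg]] := @approx_pt _ _ _ _ _ e01 (@uu_cvg _ _ _ false e Hl Heta e01) pq hc'.
  have g01' : 0 <= g <= 1 by case/andP: g01 => ga gb; rewrite (ltW ga) (ltW gb).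
  have fg1 : lam g true \is a fin_num by apply: (@fin_gen _ _ Hl Hp g true g01'); rewrite /= (proj1 (andP g01)).
  have fg0 : lam g false \is a fin_num by apply: (@fin_gen _ _ Hl Hp g false g01'); rewrite /= subr_gt0 (proj2 (andP g01)).
  have := @K_fin _ _ _ Hl Hp Heta Hm _ _ pp g01' fg0 fg1.
  have : 0 <= p * (u true g / u true p).
    apply: mulr_ge0; first by case/andP: pp => ? _; rewrite ltW.
    by apply: divr_ge0; [apply: ue_ge0 | apply: ltW].
  have : 1 < (1 - p) * (u false g / u false p) by rewrite mulrA ltr_pdivlMr // mul1r.
  rewrite /uu; lra.
- exfalso.
  case/andP: e01 => ea eb.
  have [e0|e0] := eqVneq e 0.
    by move: fe0; subst e; rewrite (@fin_gen _ _ Hl Hp 0 false) //= ?subr0 //; apply/andP.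
  move: fe1; rewrite (@fin_gen _ _ Hl Hp e true) //=; first by apply/andP.
  by rewrite lt_neqAle eq_sym e0.
Qed.
End KAll.
Section Step.
Variable R : realType.
Variable N : nat.
Variable lam : 'I_N -> R -> bool -> \bar R.
Variable eta : 'I_N -> R.
Hypothesis Hl : forall n, loss_function (lam n).
Hypothesis Hp : forall n, proper_loss (lam n).
Hypothesis Heta : forall n, 0 < eta n.
Hypothesis Hm : forall n, mixable (eta n) (lam n).

Local Notation U n b g := (ue (eta n) (lam n g b)).

Variables (W e : 'I_N -> R).
Hypothesis W0 : forall n, 0 <= W n.
Hypothesis e01 : forall n, 0 <= e n <= 1.

Definition Fs b g := \sum_n W n * (U n b (e n) / U n b g).
Definition good b g := (forall n, 0 < W n -> 0 < U n b (e n) -> 0 < U n b g) /\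
  Fs b g <= \sum_n W n.

Lemma term_ge0 n b g : 0 <= W n * (U n b (e n) / U n b g).
Proof. by apply: mulr_ge0 => //; apply: divr_ge0; apply: ue_ge0. Qed.

Lemma Fs_ge_term n b g : W n * (U n b (e n) / U n b g) <= Fs b g.
Proof.
rewrite /Fs (bigD1 n) //= lerDl; apply: sumr_ge0 => i _; exact: term_ge0.
Qed.

Lemma SW_ge0 : 0 <= \sum_n W n.
Proof. by apply: sumr_ge0 => i _. Qed.

Lemma Ksum p : 0 <= p <= 1 -> p * Fs true p + (1 - p) * Fs false p <= \sum_n W n.
Proof.
move=> p01; rewrite /Fs !mulr_sumr -big_split /=; apply: ler_sum => n _.
have K := @K_all _ _ _ (Hl n) (Hp n) (Heta n) (Hm n) _ _ p01 (e01 n).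
have := ler_wpM2l (W0 n) K.
lra.
Qed.

Lemma U_pos_fin n b g : 0 <= g <= 1 -> lam n g b \is a fin_num -> 0 < U n b g.
Proof. by move=> _; case: (lam n g b) => //= r _; apply: expR_gt0. Qed.

Lemma fin_int n b g : 0 < g < 1 -> lam n g b \is a fin_num.
Proof.
move=> /andP [g0 g1].
have g01 : 0 <= g <= 1 by rewrite (ltW g0) (ltW g1).
apply: (@fin_gen _ _ (Hl n) (Hp n) g b g01).
by case: b => /=; rewrite ?subr_gt0.
Qed.

Lemma good0 : good false 0.
Proof.
have h01 : 0 <= (0:R) <= 1 by apply/andP; split; lra.
split.
  move=> n _ _; apply: U_pos_fin => //.
  by apply: (@fin_gen _ _ (Hl n) (Hp n) 0 false h01); rewrite /= subr0.
by have := Ksum _ h01; rewrite mul0r add0r subr0 mul1r.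
Qed.

Lemma good1 : good true 1.
Proof.
have h01 : 0 <= (1:R) <= 1 by apply/andP; split; lra.
split.
  move=> n _ _; apply: U_pos_fin => //.
  by apply: (@fin_gen _ _ (Hl n) (Hp n) 1 true h01).
by have := Ksum _ h01; rewrite subrr mul0r addr0 mul1r.
Qed.

Lemma cover p : 0 <= p <= 1 -> good false p \/ good true p.
Proof.
move=> p01.
have [->|p0] := eqVneq p 0; first by left; exact: good0.
have [->|p1] := eqVneq p 1; first by right; exact: good1.
have pp : 0 < p < 1.
  case/andP: (p01) => pa pb; apply/andP; split; rewrite lt_neqAle ?pa ?pb 1?eq_sym ?p0 ?p1 //.
  by rewrite eq_sym p1.
have pos : forall b, forall n, 0 < W n -> 0 < U n b (e n) -> 0 < U n b p.
  by move=> b n _ _; apply: U_pos_fin => //; apply: fin_int.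
have K := Ksum _ p01.
case: (lerP (Fs false p) (\sum_n W n)) => h0; first by left; split => //; apply: pos.
case: (lerP (Fs true p) (\sum_n W n)) => h1; first by right; split => //; apply: pos.
exfalso.
case/andP: pp => pa pb.
have : p * (\sum_n W n) < p * Fs true p by rewrite ltr_pM2l.
have : (1 - p) * (\sum_n W n) < (1 - p) * Fs false p by rewrite ltr_pM2l // subr_gt0.
lra.
Qed.

Lemma good_closed b a : 0 <= a <= 1 -> ~ good b a ->
  exists2 d, 0 < d & forall x, `|a - x| < d -> 0 <= x <= 1 -> ~ good b x.
Proof.
move=> a01 ng.
have [Hpos|Hpos] := pselect (forall n, 0 < W n -> 0 < U n b (e n) -> 0 < U n b a).
- have hF : \sum_n W n < Fs b a.
    by rewrite ltNge; apply/negP => h; apply: ng.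
  have cF : (fun g => Fs b g) @ within `[0, 1] (nbhs a) --> Fs b a.
    rewrite /Fs; apply: cvg_big; first exact: add_continuous.
    move=> n _.
    have [ua|ua] := ltrP 0 (U n b a).
      apply: cvgMr; apply: cvgMr; apply: cvgV; first by rewrite gt_eqF.
      exact: (@uu_cvg _ _ _ b a (Hl n) (Heta n) a01).
    have ua0 : U n b a = 0 by apply/eqP; rewrite eq_le ua ue_ge0.
    have z : W n * U n b (e n) = 0.
      case: (lerP (W n) 0) => hw; first by rewrite (@le_anti _ _ (W n) 0) ?mul0r // hw W0.
      case: (lerP (U n b (e n)) 0) => hc.
        by rewrite (@le_anti _ _ (U n b (e n)) 0) ?mulr0 // hc ue_ge0.
      by exfalso; move: (Hpos n hw hc); rewrite ua0 ltxx.
    have -> : (fun x => W n * (U n b (e n) / U n b x)) = fun _ => 0.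
      by apply: funext => x; rewrite mulrA z mul0r.
    rewrite ua0 invr0 mulr0 mulr0; exact: cvg_cst.
  have H : \forall x \near within `[0, 1] (nbhs a), `|Fs b a - Fs b x| < Fs b a - \sum_n W n.
    by apply: (proj1 (cvgrPdist_lt _ _) cF); rewrite subr_gt0.
  have [d d0 Hd] := @near_within01 R a _ H.
  exists d => // x hx x01 [_ hg].
  have := Hd x hx x01.
  have := ler_norm (Fs b a - Fs b x).
  lra.
- move/existsNP: Hpos => [n /not_implyP [wn /not_implyP [cn ua]]].
  have ua0 : U n b a = 0.
    by apply/eqP; rewrite eq_le ue_ge0 andbT leNgt; apply/negP.
  set S := \sum_n W n.
  have S0 : 0 <= S by exact: SW_ge0.
  set c := U n b (e n).
  have eps0 : 0 < W n * c / (S + 1).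
    by apply: divr_gt0; [apply: mulr_gt0 | lra].
  have cU := @uu_cvg _ _ _ b a (Hl n) (Heta n) a01.
  have H : \forall x \near within `[0, 1] (nbhs a), `|ue (eta n) (lam n a b) - ue (eta n) (lam n x b)| < W n * c / (S + 1).
    by apply: (proj1 (cvgrPdist_lt _ _) cU).
  have [d d0 Hd] := @near_within01 R a _ H.
  exists d => // x hx x01 [hpos hg].
  have ux := hpos n wn cn.
  have := Hd x hx x01.
  rewrite ua0 sub0r normrN ger0_norm ?ue_ge0 // => hux.
  have := Fs_ge_term n b x.
  rewrite -/c => ht.
  have : S < W n * (c / U n b x).
    rewrite mulrA ltr_pdivlMr //.
    rewrite ltr_pdivlMr in hux; last by lra.
    have : S * U n b x <= U n b x * (S + 1) by nra.
    lra.
  rewrite /S; lra.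
Qed.

Lemma exists_good : exists g, 0 <= g <= 1 /\ good false g /\ good true g.
Proof.
set B := [set x : R | 0 <= x <= 1 /\ good false x].
have B0 : B 0 by split; [apply/andP; split; lra | exact: good0].
have Bub : ubound B 1 by move=> x [/andP [_ ?] _].
have hs : has_sup B by split; [exists 0 | exists 1].
set s := sup B.
have s0 : 0 <= s by apply: sup_upper_bound.
have s1 : s <= 1 by apply: ge_sup => //; exists 0.
have s01 : 0 <= s <= 1 by rewrite s0 s1.
have gf : good false s.
  apply: contrapT => ng.
  have [d d0 Hd] := good_closed _ _ s01 ng.
  have [x [x01 gx] hx] := sup_adherent d0 hs.
  have xs : x <= s by apply: sup_upper_bound.
  apply: (Hd x) => //.
  rewrite -/s in hx; rewrite ger0_norm; [lra | lra].
exists s; split => //; split => //.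
have [->|s1'] := eqVneq s 1; first exact: good1.
have slt : s < 1 by rewrite lt_neqAle s1' s1.
apply: contrapT => ng.
have [d d0 Hd] := good_closed _ _ s01 ng.
set m := Num.min d (1 - s).
have m0 : 0 < m by rewrite /m lt_min d0 /= subr_gt0.
have md : m <= d by rewrite /m ge_min lexx.
have m1 : m <= 1 - s by rewrite /m ge_min lexx orbT.
set x := s + m / 2.
have x01 : 0 <= x <= 1 by apply/andP; split; rewrite /x; lra.
have hx : `|s - x| < d.
  rewrite /x (_ : s - (s + m / 2) = - (m / 2)); last by ring.
  rewrite normrN ger0_norm; lra.
apply: (Hd x hx x01).
case: (cover _ x01) => // gx.
have : x <= s by apply: sup_upper_bound => //; split.
rewrite /x; lra.
Qed.
End Step.
Section Game.
Variable R : realType.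
Variable N : nat.
Variable lam : 'I_N -> R -> bool -> \bar R.
Variable eta : 'I_N -> R.
Hypothesis Hl : forall n, loss_function (lam n).
Hypothesis Hp : forall n, proper_loss (lam n).
Hypothesis Heta : forall n, 0 < eta n.
Hypothesis Hm : forall n, mixable (eta n) (lam n).

Local Notation U n b g := (ue (eta n) (lam n g b)).
Arguments good {R N}.
Arguments Fs {R N}.
Arguments exists_good {R N lam eta}.

Definition choose (W e : 'I_N -> R) : R :=
  xget 0 [set g | 0 <= g <= 1 /\ good lam eta W e false g /\ good lam eta W e true g].

Lemma choose01 W e : 0 <= choose W e <= 1.
Proof.
rewrite /choose.
have [ex|nex] := pselect (exists g, 0 <= g <= 1 /\ good lam eta W e false g /\ good lam eta W e true g).
  by have [] := xgetPex 0 ex.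
rewrite xgetPN; first by rewrite lexx ler01.
by move=> g hg; apply: nex; exists g.
Qed.

Lemma choose_good W e : (forall n, 0 <= W n) -> (forall n, 0 <= e n <= 1) ->
  good lam eta W e false (choose W e) /\ good lam eta W e true (choose W e).
Proof.
move=> W0 e01.
have ex := exists_good Hl Hp Heta Hm W e W0 e01.
by have [_ ?] := xgetPex 0 ex.
Qed.

Fixpoint Wrec (E : nat -> 'I_N -> R) (O : nat -> bool) (t : nat) : 'I_N -> R :=
  if t is t'.+1 then
    fun n => Wrec E O t' n * (U n (O t') (E t' n) / U n (O t') (choose (Wrec E O t') (E t')))
  else fun _ => 1.

Definition strat (h : seq ('I_N -> R)) (w : seq bool) : R :=
  choose (Wrec (fun i => nth (fun _ => 0) h i) (fun i => nth false w i) (size w))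
         (nth (fun _ => 0) h (size w)).

Lemma Wrec_ext E E' O O' t : (forall i, (i < t)%N -> E i = E' i) ->
  (forall i, (i < t)%N -> O i = O' i) -> Wrec E O t = Wrec E' O' t.
Proof.
elim: t => [//|t IH] hE hO /=.
rewrite IH; last 2 first.
- by move=> i hi; apply: hE; rewrite ltnS ltnW.
- by move=> i hi; apply: hO; rewrite ltnS ltnW.
by rewrite hE // hO.
Qed.

Lemma strat_pred g w t : learner_pred strat g w t = choose (Wrec g w t) (g t).
Proof.
rewrite /learner_pred /strat size_mkseq nth_mkseq //.
congr choose.
by apply: Wrec_ext => i hi; rewrite nth_mkseq // ltnS ltnW.
Qed.

Lemma ue_fin (et : R) (x : \bar R) : x \is a fin_num -> ue et x = expR (- et * fine x).
Proof. by case: x. Qed.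

Lemma ue_pos_fin (et : R) (x : \bar R) : 0 < ue et x -> x \is a fin_num.
Proof. by case: x => //=; rewrite ltxx. Qed.

Variables (g : nat -> 'I_N -> R) (w : nat -> bool).
Hypothesis g01 : forall t n, 0 <= g t n <= 1.

Lemma Wrec_ge0 t n : 0 <= Wrec g w t n.
Proof.
elim: t => [|t IH] /=; first exact: ler01.
by apply: mulr_ge0 => //; apply: divr_ge0; apply: ue_ge0.
Qed.

Lemma Wrec_good t : good lam eta (Wrec g w t) (g t) (w t) (choose (Wrec g w t) (g t)).
Proof.
have [h0 h1] := choose_good (Wrec g w t) (g t) (Wrec_ge0 t) (g01 t).
by case: (w t).
Qed.

Lemma Wrec_sum t : \sum_n Wrec g w t n <= N%:R.
Proof.
elim: t => [|t IH] /=.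
  by rewrite sumr_const card_ord.
apply: le_trans IH.
by have [_ +] := Wrec_good t.
Qed.

Lemma Wrec_exp t n : (forall s, (s < t)%N -> lam n (g s n) (w s) \is a fin_num) ->
  [/\ (forall s, (s < t)%N -> lam n (choose (Wrec g w s) (g s)) (w s) \is a fin_num),
   0 < Wrec g w t n &
   Wrec g w t n = expR (eta n * (\sum_(s < t) fine (lam n (choose (Wrec g w s) (g s)) (w s))
                        - \sum_(s < t) fine (lam n (g s n) (w s))))].
Proof.
elim: t => [|t IH] hfin.
  by split => //; rewrite !big_ord0 subrr mulr0 expR0.
have [IH1 IH2 IH3] := IH (fun s hs => hfin s (ltnW hs)).
have fe := hfin t (ltnSn t).
have ue0 : 0 < U n (w t) (g t n) by rewrite ue_fin // expR_gt0.
have [hpos _] := Wrec_good t.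
have ug0 := hpos n IH2 ue0.
have fg := ue_pos_fin _ _ ug0.
split.
- move=> s; rewrite ltnS leq_eqVlt => /orP [/eqP -> //|]; exact: IH1.
- by rewrite /= mulr_gt0 // divr_gt0.
- rewrite /= IH3 !big_ord_recr /= (ue_fin _ _ fe) (ue_fin _ _ fg).
  rewrite -expRB -expRD; congr expR; ring.
Qed.
End Game.
Arguments strat {R N}.
Arguments choose {R N}.
Arguments Wrec {R N}.
Arguments choose01 {R N}.
Arguments strat_pred {R N}.
Arguments Wrec_ge0 {R N}.

Theorem corollary2 (R : realType) (N : nat)
  (lam : 'I_N -> R -> bool -> \bar R) (eta : 'I_N -> R) :
  (forall n, loss_function (lam n)) ->
  (forall n, proper_loss (lam n)) ->
  (forall n, 0 < eta n) ->
  (forall n, mixable (eta n) (lam n)) ->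
  exists S : seq ('I_N -> R) -> seq bool -> R,
    (forall h w, 0 <= S h w <= 1) /\
    forall (g : nat -> 'I_N -> R) (w : nat -> bool),
      (forall t n, 0 <= g t n <= 1) ->
      forall (T : nat) (n : 'I_N),
        (learner_loss lam S g w T n <=
         expert_loss lam g w T n + (ln (N%:R) / eta n)%:E)%E.
Proof.
move=> Hl Hp Heta Hm.
exists (strat lam eta); split.
  by move=> h w; apply: choose01.
move=> g w g01 T n.
rewrite /learner_loss /expert_loss.
under eq_bigr do rewrite strat_pred.
have [hfin|hnfin] := pselect (forall s, (s < T)%N -> lam n (g s n) (w s) \is a fin_num).
- have [F1 F2 F3] := @Wrec_exp _ _ _ _ Hl Hp Heta Hm g w g01 T n hfin.
  have -> : (\sum_(t < T) lam n (choose lam eta (Wrec lam eta g w t) (g t)) (w t) =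
     (\sum_(t < T) fine (lam n (choose lam eta (Wrec lam eta g w t) (g t)) (w t)))%:E)%E.
    by rewrite -sumEFin; apply: eq_bigr => t _; rewrite fineK //; apply: F1.
  have -> : (\sum_(t < T) lam n (g t n) (w t) = (\sum_(t < T) fine (lam n (g t n) (w t)))%:E)%E.
    by rewrite -sumEFin; apply: eq_bigr => t _; rewrite fineK //; apply: hfin.
  rewrite -EFinD lee_fin.
  set L := \sum_(t < T) _ in F3 *; set E := \sum_(t < T) _ in F3 *.
  have N0 : (0 < N)%N by apply: (leq_ltn_trans (leq0n n) (ltn_ord n)).
  have hW : Wrec lam eta g w T n <= N%:R.
    apply: le_trans (@Wrec_sum _ _ _ _ Hl Hp Heta Hm g w g01 T).
    rewrite (bigD1 n) //= lerDl; apply: sumr_ge0 => i _; exact: Wrec_ge0.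
  rewrite F3 in hW.
  have Npos : (0:R) < N%:R by rewrite ltr0n.
  have hln : ln (expR (eta n * (L - E))) <= ln (N%:R : R).
    by rewrite ler_ln // ?posrE ?expR_gt0.
  rewrite expRK in hln.
  have : L - E <= ln (N%:R : R) / eta n by rewrite ler_pdivlMr // mulrC.
  lra.
- move/existsNP: hnfin => [s /not_implyP [hs hns]].
  have hinf : lam n (g s n) (w s) = +oo%E.
    have := lam_ge0 _ _ (Hl n) _ (w s) (g01 s n).
    by move: hns; case: (lam n (g s n) (w s)).
  have Einf : (\sum_(t < T) lam n (g t n) (w t) = +oo)%E.
    rewrite (bigD1 (Ordinal hs)) //= hinf addye //.
    apply/negP => /eqP H.
    have : (0 <= \sum_(i < T | i != Ordinal hs) lam n (g i n) (w i))%E.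
      by apply: sume_ge0 => t _; apply: (lam_ge0 _ _ (Hl n) _ _ (g01 t n)).
    by rewrite H.
  by rewrite Einf addye // leey.
Qed.
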